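(* Let $\mathscr{H}$ be a Hilbert space and let $U \in \mathcal{B}(\mathscr{H})$ be a unitary operator whose spectrum satisfies $\mathrm{sp}(U) \subset C_k$ for some $k \in \{1,2,3,4\}$. Then $U$ cannot be written as the product of three symmetries in $\mathcal{B}(\mathscr{H})$.
   Context: $\mathcal{B}(\mathscr{H})$ is the algebra of bounded operators on $\mathscr{H}$; a symmetry is a self-adjoint unitary. For $1 \le k \le 4$, $C_k := \{\exp(2\pi i\alpha) : \tfrac{k-1}{4} < \alpha < \tfrac{k}{4}\}$, the four connected components of $S^1 \setminus \{1, i, -1, -i\}$. *)

(* Defs.v *)
From mathcomp Require Import all_boot all_order all_algebra.
From mathcomp Require Import complex.
From mathcomp Require Import all_classical all_reals.
From mathcomp Require Import trigo.

Set Implicit Arguments.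
Unset Strict Implicit.
Unset Printing Implicit Defensive.

Import Order.TTheory GRing.Theory Num.Theory.
Local Open Scope ring_scope.
Local Open Scope complex_scope.

Section Hilbert.
Variables (R : realType) (H : lmodType R[i]) (inner : H -> H -> R[i]).

Definition hnorm (x : H) : R := Num.sqrt (complex.Re (inner x x)).

Definition is_inner_product : Prop :=
  [/\ forall (a : R[i]) (x y z : H),
        inner (a *: x + y) z = a * inner x z + inner y z,
      forall x y : H, inner y x = (inner x y)^*,
      forall x : H, 0 <= inner x x
    & forall x : H, inner x x = 0 -> x = 0].

Definition hcauchy (u : nat -> H) : Prop :=
  forall e : R, 0 < e -> exists N : nat, forall m n : nat,
    (N <= m)%N -> (N <= n)%N -> hnorm (u m - u n) < e.

Definition hconverges (u : nat -> H) : Prop :=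
  exists l : H, forall e : R, 0 < e -> exists N : nat, forall n : nat,
    (N <= n)%N -> hnorm (u n - l) < e.

Definition is_hilbert : Prop :=
  is_inner_product /\ forall u : nat -> H, hcauchy u -> hconverges u.

Definition bounded_op (T : H -> H) : Prop :=
  (forall (a : R[i]) (x y : H), T (a *: x + y) = a *: T x + T y) /\
  exists M : R, forall x : H, hnorm (T x) <= M * hnorm x.

Definition is_adjoint (T T' : H -> H) : Prop :=
  forall x y : H, inner (T x) y = inner x (T' y).

Definition unitary (T : H -> H) : Prop :=
  bounded_op T /\ exists T' : H -> H,
    [/\ bounded_op T', is_adjoint T T',
        forall x, T' (T x) = x & forall x, T (T' x) = x].

Definition symmetry (S : H -> H) : Prop := unitary S /\ is_adjoint S S.

Definition spectrum (T : H -> H) : set R[i] :=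
  [set l | ~ exists V : H -> H,
      [/\ bounded_op V,
          forall x, V (T x - l *: x) = x
        & forall x, T (V x) - l *: V x = x]].

End Hilbert.

Definition arcC (R : realType) (k : nat) : set R[i] :=
  [set z | exists alpha : R,
      (k%:R - 1) / 4%:R < alpha /\ alpha < k%:R / 4%:R /\
      z = (cos (2%:R * pi * alpha)) +i* (sin (2%:R * pi * alpha))].

(* Main.v *)
Require Import Defs.
From mathcomp Require Import all_boot all_order all_algebra.
From mathcomp Require Import complex.
From mathcomp Require Import all_classical all_reals.
From mathcomp Require Import trigo.
From mathcomp Require Import ring lra.
Import Order.TTheory GRing.Theory Num.Theory.
Set Implicit Arguments.
Unset Strict Implicit.
Unset Printing Implicit Defensive.
Local Open Scope ring_scope.
Local Open Scope classical_set_scope.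
Local Open Scope complex_scope.
Local Notation Re := complex.Re.
Local Notation Im := complex.Im.

Section Cplx.
Variable R : realType.
Implicit Types (x y : R[i]) (r : R).
Lemma ReD x y : Re (x + y) = Re x + Re y. Proof. by case: x => a b; case: y => c d. Qed.
Lemma ImD x y : Im (x + y) = Im x + Im y. Proof. by case: x => a b; case: y => c d. Qed.
Lemma ReN x : Re (- x) = - Re x. Proof. by case: x. Qed.
Lemma ImN x : Im (- x) = - Im x. Proof. by case: x. Qed.
Lemma ReM x y : Re (x * y) = Re x * Re y - Im x * Im y. Proof. by case: x => a b; case: y => c d. Qed.
Lemma ImM x y : Im (x * y) = Re x * Im y + Im x * Re y. Proof. case: x => a b; case: y => c d /=. ring. Qed.
Lemma ReJ x : Re (x^*%C) = Re x. Proof. by case: x. Qed.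
Lemma ImJ x : Im (x^*%C) = - Im x. Proof. by case: x. Qed.
Lemma ReC r : Re (r%:C) = r. Proof. by []. Qed.
Lemma ImC r : Im (r%:C) = 0. Proof. by []. Qed.
Lemma Re1 : Re (1 : R[i]) = 1. Proof. by []. Qed.
Lemma Im1 : Im (1 : R[i]) = 0. Proof. by []. Qed.
Lemma Re0 : Re (0 : R[i]) = 0. Proof. by []. Qed.
Lemma Im0 : Im (0 : R[i]) = 0. Proof. by []. Qed.
Lemma ReCo (a b : R) : Re (a +i* b) = a. Proof. by []. Qed.
Lemma ImCo (a b : R) : Im (a +i* b) = b. Proof. by []. Qed.
Lemma conjD x y : (x + y)^*%C = x^*%C + y^*%C. Proof. by case: x => a b; case: y => c d /=; simpc. Qed.
Lemma conjM x y : (x * y)^*%C = x^*%C * y^*%C. Proof. by case: x => a b; case: y => c d /=; simpc. Qed.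
Lemma conjN x : (- x)^*%C = - x^*%C. Proof. by case: x => a b /=; simpc. Qed.
Lemma conj0 : (0 : R[i])^*%C = 0. Proof. by rewrite /= oppr0. Qed.
Lemma conjR r : (r%:C)^*%C = r%:C. Proof. by rewrite /= oppr0. Qed.
Lemma cplx_eq x y : Re x = Re y -> Im x = Im y -> x = y.
Proof. by case: x => a b; case: y => c d /= -> ->. Qed.
End Cplx.

Ltac cRI := rewrite ?(ReD, ImD, ReN, ImN, ReM, ImM, ReJ, ImJ, ReC, ImC,
   Re1, Im1, Re0, Im0, ReCo, ImCo).

Section Hilb.
Variables (R : realType) (H : lmodType R[i]) (inner : H -> H -> R[i]).
Hypothesis ip : is_inner_product inner.

Lemma ip_linl a x y z : inner (a *: x + y) z = a * inner x z + inner y z.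
Proof. by case: ip => h _ _ _; apply: h. Qed.
Lemma ip_conj x y : inner y x = (inner x y)^*%C.
Proof. by case: ip => _ h _ _; apply: h. Qed.
Lemma ip_ge0 x : 0 <= inner x x.
Proof. by case: ip => _ _ h _; apply: h. Qed.
Lemma ip_def x : inner x x = 0 -> x = 0.
Proof. by case: ip => _ _ _ h; apply: h. Qed.

Lemma ip0l z : inner 0 z = 0.
Proof.
have h := ip_linl 1 0 0 z; rewrite scaler0 addr0 mul1r in h.
by apply: (addrI (inner 0 z)); rewrite addr0 -h.
Qed.
Lemma ipDl x y z : inner (x + y) z = inner x z + inner y z.
Proof. by have := ip_linl 1 x y z; rewrite scale1r mul1r. Qed.
Lemma ipZl a x z : inner (a *: x) z = a * inner x z.
Proof. by have := ip_linl a x 0 z; rewrite addr0 ip0l addr0. Qed.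
Lemma ipNl x z : inner (- x) z = - inner x z.
Proof. by rewrite -scaleN1r ipZl mulN1r. Qed.
Lemma ipBl x y z : inner (x - y) z = inner x z - inner y z.
Proof. by rewrite ipDl ipNl. Qed.
Lemma ip0r z : inner z 0 = 0.
Proof. by rewrite ip_conj ip0l conj0. Qed.
Lemma ipDr x y z : inner z (x + y) = inner z x + inner z y.
Proof. by rewrite ip_conj ipDl conjD [inner z x]ip_conj [inner z y]ip_conj. Qed.
Lemma ipZr a x z : inner z (a *: x) = a^*%C * inner z x.
Proof. by rewrite ip_conj ipZl conjM [inner z x]ip_conj. Qed.
Lemma ipNr x z : inner z (- x) = - inner z x.
Proof. by rewrite ip_conj ipNl conjN [inner z x]ip_conj. Qed.
Lemma ipBr x y z : inner z (x - y) = inner z x - inner z y.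
Proof. by rewrite ipDr ipNr. Qed.

Definition qq x := Re (inner x x).
Local Notation q := qq.

Lemma ipxx x : inner x x = (q x)%:C.
Proof.
rewrite /qq; move: (ip_ge0 x) => /ger0_Im.
by case: (inner x x) => a b /= ->.
Qed.
Lemma q_ge0 x : 0 <= q x.
Proof. by have := ip_ge0 x; rewrite ipxx ler0c. Qed.
Lemma q_eq0 x : q x = 0 -> x = 0.
Proof. by move=> h; apply: ip_def; rewrite ipxx h. Qed.
Lemma q0 : q 0 = 0.
Proof. by rewrite /qq ip0l. Qed.
Lemma q_gt0 x : x != 0 -> 0 < q x.
Proof.
move=> hx; rewrite lt_neqAle q_ge0 andbT; apply/eqP => h.
by move/eqP: hx; apply; apply: q_eq0.
Qed.

Lemma ReipJ x y : Re (inner y x) = Re (inner x y).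
Proof. by rewrite ip_conj ReJ. Qed.

Lemma qD x y : q (x + y) = q x + q y + 2 * Re (inner x y).
Proof.
rewrite /qq ipDl !ipDr; cRI; rewrite (ReipJ x y); ring.
Qed.
Lemma qN x : q (- x) = q x.
Proof. by rewrite /qq ipNl ipNr opprK. Qed.
Lemma qB x y : q (x - y) = q x + q y - 2 * Re (inner x y).
Proof. rewrite qD qN ipNr; cRI; ring. Qed.
Definition n2 (a : R[i]) := Re a ^+ 2 + Im a ^+ 2.
Lemma qZ a x : q (a *: x) = n2 a * q x.
Proof.
rewrite /qq ipZl ipZr ipxx /n2; case: a => a b /=. ring.
Qed.
Lemma amgm x y : 2 * Re (inner x y) <= q x + q y.
Proof. have := q_ge0 (x - y); rewrite qB; lra. Qed.
Lemma amgm' x y : - (q x + q y) <= 2 * Re (inner x y).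
Proof. have := q_ge0 (x + y); rewrite qD; lra. Qed.
Lemma qD_le x y : q (x + y) <= 2 * q x + 2 * q y.
Proof. have := amgm x y; rewrite qD; lra. Qed.

End Hilb.

Section Ops.
Variables (R : realType) (H : lmodType R[i]) (inner : H -> H -> R[i]).
Hypothesis ip : is_inner_product inner.
Local Notation q := (qq inner).

Definition lin (T : H -> H) := forall a x y, T (a *: x + y) = a *: T x + T y.

Section LinT.
Variables (T : H -> H) (hT : lin T).
Lemma lin0 : T 0 = 0.
Proof.
have h := hT 1 0 0; rewrite scaler0 addr0 scale1r in h.
by apply: (addrI (T 0)); rewrite addr0 -h.
Qed.
Lemma linD x y : T (x + y) = T x + T y.
Proof. by have := hT 1 x y; rewrite !scale1r. Qed.
Lemma linZ a x : T (a *: x) = a *: T x.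
Proof. by have := hT a x 0; rewrite !addr0 lin0 addr0. Qed.
Lemma linN x : T (- x) = - T x.
Proof. by rewrite -scaleN1r linZ scaleN1r. Qed.
Lemma linB x y : T (x - y) = T x - T y.
Proof. by rewrite linD linN. Qed.
End LinT.

Definition AS (B : H -> H) := forall e : R, 0 < e -> exists x, q (B x) < e * q x.
Definition LI (B : H -> H) := exists (V : H -> H) (K : R),
  [/\ 0 <= K, (forall y, q (V y) <= K * q y) & forall x, V (B x) = x].

Lemma AS_LI B : AS B -> LI B -> False.
Proof.
move=> hA [V [K [K0 hK hV]]].
have [x hx] := hA (K + 1)^-1 (ltac:(rewrite invr_gt0; lra)).
have h1 := hK (B x); rewrite hV in h1.
have h2 := q_ge0 ip (B x).
have h3 : (K + 1) * q (B x) < q x.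
  have hK1 : 0 < K + 1 by lra.
  have := hx; rewrite -(ltr_pM2l hK1) mulrA mulfV ?mul1r //; lra.
rewrite mulrDl mul1r in h3.
move: h1 h2 h3; set u := K * q (B x); set v := q (B x); set w := q x; lra.
Qed.

Lemma notAS C : ~ AS C -> exists2 e, 0 < e & forall x, e * q x <= q (C x).
Proof.
move=> nA; apply: contrapT => hne; apply: nA => e e0.
apply: contrapT => hnx; apply: hne; exists e => // x.
rewrite leNgt; apply/negP => hlt; apply: hnx; by exists x.
Qed.

Lemma AS_split B C D : AS B -> (forall x, B x = C (D x)) -> AS C \/ AS D.
Proof.
move=> hB hBCD.
case: (pselect (AS C)) => [|nC]; first by left.
case: (pselect (AS D)) => [|nD]; first by right.
exfalso.
have [eC eC0 hC] := notAS nC; have [eD eD0 hD] := notAS nD.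
have [x hx] := hB (eC * eD) (mulr_gt0 eC0 eD0).
rewrite hBCD in hx.
have h1 := hC (D x); have h2 := hD x.
have h3 := q_ge0 ip x.
have : eC * (eD * q x) <= eC * q (D x) by rewrite ler_pM2l.
rewrite mulrA; move: hx h1; set u := eC * eD * q x; set v := eC * q (D x); lra.
Qed.

Lemma iso_notAS C : (forall x, q (C x) = q x) -> ~ AS C.
Proof.
move=> hC hA; have [x] := hA 1 ltr01; rewrite hC mul1r; by rewrite ltxx.
Qed.

Lemma AS_scale a D : 0 < n2 a -> AS (fun x => a *: D x) -> AS D.
Proof.
move=> ha hA e e0.
have [x hx] := hA (e * n2 a) (mulr_gt0 e0 ha).
exists x; rewrite (qZ ip) in hx.
have : n2 a * q (D x) < n2 a * (e * q x).
  move: hx; set u := n2 a; set v := q (D x); set w := q x.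
  by rewrite !mulrA (mulrC u e).
by rewrite ltr_pM2l.
Qed.

Lemma bound_q (V : H -> H) : bounded_op inner V ->
  lin V /\ exists K, 0 <= K /\ forall y, q (V y) <= K * q y.
Proof.
case=> hl [M hM]; split => //; exists (M ^+ 2); split; first exact: sqr_ge0.
move=> y; have hab := hM y; rewrite /hnorm in hab; move: hab.
set a := Num.sqrt (Re (inner (V y) (V y))); set b := Num.sqrt (Re (inner y y)) => hab.
have ha : 0 <= a := sqrtr_ge0 _.
have hb : 0 <= b := sqrtr_ge0 _.
have hMb : 0 <= M * b := le_trans ha hab.
have e1 : q (V y) = a ^+ 2 by rewrite /a sqr_sqrtr //; exact: (q_ge0 ip).
have e2 : q y = b ^+ 2 by rewrite /b sqr_sqrtr //; exact: (q_ge0 ip).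
rewrite e1 e2.
by rewrite -exprMn ler_pXn2r.

Qed.

Lemma notspec_LI T l : bounded_op inner T -> ~ spectrum inner T l ->
  LI (fun x => T x - l *: x).
Proof.
move=> _ /contrapT [V [hV h1 h2]].
have [_ [K [K0 hK]]] := bound_q hV.
by exists V, K; split.
Qed.

End Ops.

Section Unit.
Variables (R : realType) (H : lmodType R[i]) (inner : H -> H -> R[i]).
Hypothesis ip : is_inner_product inner.
Local Notation q := (qq inner).
Local Notation AS := (AS inner).
Local Notation LI := (LI inner).

Definition upair (W W' : H -> H) := [/\ lin W, lin W',
  (forall x y, inner (W x) y = inner x (W' y)),
  (forall x, W' (W x) = x) & (forall x, W (W' x) = x)].

Lemma upair_adj' W W' : upair W W' -> forall x y, inner (W' x) y = inner x (W y).
Proof.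
case=> _ _ ha _ _ x y.
by rewrite (ip_conj ip) -ha -(ip_conj ip).
Qed.

Lemma upair_sym W W' : upair W W' -> upair W' W.
Proof.
move=> hW; have := upair_adj' hW; case: hW => h1 h2 _ h4 h5 ha.
by split.
Qed.

Lemma upair_iso W W' : upair W W' -> forall x, q (W x) = q x.
Proof. by case=> _ _ ha h4 _ x; rewrite /qq ha h4. Qed.

Lemma upair_iso' W W' : upair W W' -> forall x, q (W' x) = q x.
Proof. by move/upair_sym/upair_iso. Qed.

Lemma unitary_upair U : unitary inner U -> exists U', upair U U'.
Proof.
case=> [[hl _] [U' [[hl' _] ha h1 h2]]].
by exists U'; split.
Qed.

Lemma sym_upair S : symmetry inner S -> upair S S.
Proof.
case=> [[[hl _] [S' [[hl' _] ha h1 h2]]] hsa].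
have eS : forall y, S' y = S y.
  move=> y; apply/eqP; rewrite -subr_eq0; apply/eqP; apply: (ip_def ip).
  by rewrite (ipBr ip) -ha hsa subrr.
split => // x; first by rewrite -{2}(h1 x) eS.
by rewrite -{2}(h1 x) eS.
Qed.

Lemma lin_subs (A : H -> H) (c : R[i]) : lin A -> lin (fun x => A x - c *: x).
Proof.
move=> hA a x y /=; rewrite hA scalerDr scalerBr !scalerA (mulrC c a).
rewrite opprD addrACA //.
Qed.

Lemma infS (A : H -> H) K : lin A -> 0 <= K -> (forall x, q (A x) <= K * q x) ->
  (forall x y, inner (A x) y = inner x (A y)) -> (exists x : H, x != 0) ->
  exists m : R, [/\ (forall x, m * q x <= Re (inner (A x) x)),
    (forall L, (forall x, L * q x <= Re (inner (A x) x)) -> L <= m)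
  & AS (fun x => A x - m%:C *: x)].
Proof.
move=> hA K0 hK hsa [x0 hx0].
set E := [set r | exists x, x != 0 /\ r = Re (inner (A x) x) / q x].
have lbA : forall x, - ((K + 1) / 2) * q x <= Re (inner (A x) x).
  move=> x; have h1 := amgm' ip (A x) x; have h2 := hK x.
  move: h1 h2; set u := Re _; set v := q (A x); set w := q x.
  have -> : - ((K + 1) / 2) * w = - (K * w + w) / 2 by field.
  lra.
have hE0 : E !=set0.
  by exists (Re (inner (A x0) x0) / q x0); exists x0.
have hElb : has_lbound E.
  exists (- ((K + 1) / 2)) => r [x [hx ->]].
  by rewrite ler_pdivlMr ?(q_gt0 ip) ?lbA.
set m := inf E.
have hm : forall x, m * q x <= Re (inner (A x) x).
  move=> x; have [->|hx] := eqVneq x 0.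
    by rewrite (q0 ip) mulr0 (lin0 hA) (ip0l ip).
  have := ge_inf hElb; move/(_ (Re (inner (A x) x) / q x)).
  rewrite -ler_pdivlMr ?(q_gt0 ip) //; apply; by exists x.
exists m; split => //.
  move=> L hL; apply: lb_le_inf => // r [x [hx ->]].
  by rewrite ler_pdivlMr ?(q_gt0 ip) ?hL.
set B := fun x => A x - m%:C *: x.
have hB : lin B := lin_subs _ hA.
have hBsa : forall x y, inner (B x) y = inner x (B y).
  move=> x y; rewrite /B (ipBl ip) (ipBr ip) (ipZl ip) (ipZr ip) hsa conjR //.
have hBpos : forall x, 0 <= Re (inner (B x) x).
  move=> x; rewrite /B (ipBl ip) (ipZl ip) (ipxx ip); cRI.
  have := hm x; lra.
set L0 := K + m ^+ 2 + 1.
have L00 : 0 < L0 by rewrite /L0; have := sqr_ge0 m; lra.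
have hBb : forall z, Re (inner (B z) z) <= L0 * q z.
  move=> z; have h1 := amgm ip (B z) z.
  have h2 := qD_le ip (A z) (- (m%:C *: z)).
  rewrite (qN ip) (qZ ip) in h2.
  have e2 : n2 m%:C = m ^+ 2 by rewrite /n2 ReC ImC expr0n addr0.
  rewrite e2 in h2; have h3 := hK z.
  rewrite /B in h1 *; move: h1 h2 h3; rewrite /L0.
  set u := Re _; set v := q _; set w := q z; set v' := q (A z).
  have := q_ge0 ip z; rewrite -/w; rewrite !mulrDl mul1r; lra.
have eP' : forall x, Re (inner (B x) x) = Re (inner (A x) x) - m * q x.
  by move=> x; rewrite /B (ipBl ip) (ipZl ip) (ipxx ip); cRI; ring.
clearbody B.
move=> e e0.
have hl : inf E < m + e / L0 by rewrite -/m ltrDl divr_gt0.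
have [r [x [hx ->]] hr] := inf_lt hE0 hl.
exists x.
have qx0 := q_gt0 ip hx.
rewrite ltr_pdivrMr // in hr.
set P := Re (inner (B x) x).
have eP : P = Re (inner (A x) x) - m * q x by apply: eP'.
have hP : P < e / L0 * q x by rewrite eP; move: hr; rewrite mulrDl; lra.
set z := L0%:C *: x - B x.
have hz := hBpos z.
have ez : Re (inner (B z) z) = L0 ^+ 2 * P - 2 * L0 * q (B x) + Re (inner (B (B x)) (B x)).
  rewrite /z (linB hB) (linZ hB) !(ipBl ip) !(ipBr ip) !(ipZl ip) !(ipZr ip) [inner (B (B x)) x]hBsa.
  rewrite /P /qq; cRI; ring.
have hZ := hBb (B x).
have h1 : 0 <= L0 * (L0 * P - q (B x)).
  move: hz hZ; rewrite ez; set Q := q (B x); set Z := Re _.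
  rewrite mulrBr mulrA -expr2; lra.
rewrite pmulr_rge0 // subr_ge0 in h1.
apply: le_lt_trans h1 _.
have h2 : L0 * P < L0 * (e / L0 * q x) by rewrite ltr_pM2l.
have e3 : L0 * (e / L0 * q x) = e * q x.
  by field; rewrite gt_eqF.
by rewrite -e3.
Qed.

End Unit.

Section G.
Variables (R : realType) (H : lmodType R[i]) (inner : H -> H -> R[i]).
Hypothesis ip : is_inner_product inner.
Local Notation q := (qq inner).
Local Notation AS := (AS inner).

Lemma vec4 (u v w : H) (al be ga de : R[i]) :
  al *: u - be *: w - (ga *: w - de *: v) = al *: u + de *: v - (be + ga) *: w.
Proof. by rewrite scalerDl opprB opprD addrACA. Qed.

Lemma re_bound (W W' : H -> H) (c : R[i]) : upair inner W W' -> n2 c = 1 ->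
  forall x, - q x <= Re (c^*%C * inner (W x) x) <= q x.
Proof.
move=> hW hc x; rewrite -(ipZl ip).
have h1 := amgm ip (c^*%C *: W x) x; have h2 := amgm' ip (c^*%C *: W x) x.
rewrite (qZ ip) (upair_iso hW) in h1 h2.
have e : n2 c^*%C = 1 by rewrite -hc /n2; cRI; ring.
rewrite e mul1r in h1 h2.
by apply/andP; split; lra.
Qed.

Lemma lemG (W W' : H -> H) (c : R[i]) : upair inner W W' -> n2 c = 1 ->
  (exists x : H, x != 0) ->
  exists m : R, [/\ -1 <= m <= 1, (forall x, m * q x <= Re (c^*%C * inner (W x) x)) &
    AS (fun x => W x - (c * (m +i* Num.sqrt (1 - m ^+ 2))) *: x) \/
    AS (fun x => W x - (c * (m -i* Num.sqrt (1 - m ^+ 2))) *: x)].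
Proof.
move=> hW hc hne.
have [hWl hW'l hadj hW'W hWW'] := hW.
have hadj' := upair_adj' ip hW.
set A := fun x => c^*%C *: W x + c *: W' x.
have hAl : lin A.
  move=> a x y; rewrite /A hWl hW'l !scalerDr !scalerA (mulrC c^*%C a) (mulrC c a).
  by rewrite -!scalerA addrACA.
have hAb : forall x, q (A x) <= 4 * q x.
  move=> x; have h := qD_le ip (c^*%C *: W x) (c *: W' x).
  rewrite !(qZ ip) (upair_iso hW) (upair_iso' ip hW) in h.
  have e : n2 c^*%C = 1 by rewrite -hc /n2; cRI; ring.
  rewrite e hc !mul1r in h; rewrite /A; lra.
have hAsa : forall x y, inner (A x) y = inner x (A y).
  move=> x y; rewrite /A (ipDl ip) (ipDr ip) !(ipZl ip) !(ipZr ip) hadj hadj'.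
  have -> : c^*%C^*%C = c by case: c {hc A hAl hAb} => a b /=; rewrite opprK.
  by rewrite addrC.
have eA : forall x, Re (inner (A x) x) = 2 * Re (c^*%C * inner (W x) x).
  move=> x; rewrite /A (ipDl ip) !(ipZl ip) hadj' [inner x (W x)](ip_conj ip); cRI; ring.
have [M [hM hL hAS]] := infS ip hAl (ler0n _ 4) hAb hAsa hne.
set m := M / 2.
have eM : M = 2 * m by rewrite /m; field.
clearbody m; subst M.
have hrb := re_bound hW hc.
have hmb : -1 <= m <= 1.
  have [x0 hx0] := hne; have q0 := q_gt0 ip hx0.
  apply/andP; split.
    have : -2 <= 2 * m.
      apply: hL => x; rewrite eA; have := hrb x.
      case/andP => h1 h2; lra.
    lra.
  have := hM x0; rewrite eA; have := hrb x0; case/andP => _ h2 h3.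
  have : 2 * m * q x0 <= 2 * q x0 by lra.
  by rewrite -mulrA ler_pM2l // -{2}(mul1r (q x0)) ler_pM2r.
exists m; split => //.
- move=> x; have := hM x; rewrite eA -mulrA ler_pM2l //.
- set s := Num.sqrt (1 - m ^+ 2).
  set mu1 := c * (m +i* s); set mu2 := c * (m -i* s).
  have hs2 : s ^+ 2 = 1 - m ^+ 2.
    rewrite /s sqr_sqrtr // subr_ge0; case/andP: hmb => h1 h2; nra.
  have hc' : Re c ^+ 2 = 1 - Im c ^+ 2 by rewrite -hc /n2; ring.
  have e1 : c^*%C * (mu1 * mu2) = c.
    by apply: cplx_eq; rewrite /mu1 /mu2; cRI; ring: hc' hs2.
  have e2 : c^*%C * mu2 + c^*%C * mu1 = (2 * m)%:C.
    by apply: cplx_eq; rewrite /mu1 /mu2; cRI; ring: hc' hs2.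
  set D2 := fun x => W x - mu2 *: x.
  set D1 := fun x => c^*%C *: (W x - mu1 *: x).
  have eq : forall x, A x - (2 * m)%:C *: x = W' (D1 (D2 x)).
    move=> x; rewrite /D1 /D2 !(linZ hW'l, linB hW'l, hW'W).
    by rewrite !scalerBr !scalerA vec4 -mulrA e1 e2.
  have [hW'as|hDD] := AS_split ip hAS eq.
    by exfalso; apply: (iso_notAS (upair_iso' ip hW)).
  have [hD1|hD2] := AS_split ip hDD (fun x => erefl).
    left; apply: (AS_scale ip (a := c^*%C)) hD1.
    by rewrite /n2; cRI; rewrite sqrrN -/(n2 c) hc ltr01.
  by right.
Qed.
End G.

Section Fin.
Variables (R : realType) (H : lmodType R[i]) (inner : H -> H -> R[i]).
Hypothesis ip : is_inner_product inner.
Local Notation q := (qq inner).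
Local Notation AS := (AS inner).

Lemma imbound u e r : 0 < r -> `|Im (inner u e)| * (2 * r) <= r ^+ 2 * q u + q e.
Proof.
move=> r0.
have h1 := amgm ip ((0 +i* r) *: u) e; have h2 := amgm ip ((0 +i* (- r)) *: u) e.
rewrite !(qZ ip) !(ipZl ip) /n2 in h1 h2; cRI.
move: h1 h2; cRI; rewrite sqrrN expr0n /= add0r.
have := q_ge0 ip u; have := q_ge0 ip e.
set wr := Re _; set wi := Im _; set Qu := q u; set Qe := q e.
case: (lerP 0 wi) => hw; [rewrite ger0_norm // | rewrite ltr0_norm //]; rewrite !mul0r !sub0r; nra.
Qed.

Lemma rebound u v : `|Re (inner u v)| <= (q u + q v) / 2.
Proof.
have h1 := amgm ip u v; have h2 := amgm' ip u v.
rewrite ler_norml; apply/andP; split; lra.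
Qed.

End Fin.

Section Fin2.
Variables (R : realType) (H : lmodType R[i]) (inner : H -> H -> R[i]).
Hypothesis ip : is_inner_product inner.
Local Notation q := (qq inner).
Local Notation AS := (AS inner).

Lemma final (S1 S2 S3 U : H -> H) (mu : R[i]) (cs ss m1 m2 : R) :
  upair inner S1 S1 -> upair inner S2 S2 -> upair inner S3 S3 ->
  (forall x, U x = S1 (S2 (S3 x))) -> n2 mu = 1 ->
  AS (fun x => S3 (S1 x) - mu *: x) ->
  cs ^+ 2 = 1 -> ss ^+ 2 = 1 -> 0 < m1 -> 0 < m2 ->
  (forall x, m1 * q x <= cs * Re (inner (U x) x)) ->
  (forall x, m2 * q x <= ss * Im (inner (U x) x)) -> False.
Proof.
move=> h1 h2 h3 hU hmu hAS hcs hss hm1 hm2 hb1 hb2.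
have [l1 _ a1 i1 _] := h1; have [l2 _ a2 i2 _] := h2; have [l3 _ a3 i3 _] := h3.
have hmm : mu^*%C * mu = 1.
  apply: cplx_eq; cRI; last by ring.
  have -> : Re mu * Re mu - - Im mu * Im mu = n2 mu by rewrite /n2; ring.
  exact: hmu.
have hmm' : mu * mu^*%C = 1 by rewrite mulrC.
have hn2J : n2 (- mu^*%C) = 1 by rewrite -hmu /n2; cRI; rewrite !sqrrN.
set eta := m1 * m2 / 2.
have eta0 : 0 < eta by rewrite /eta divr_gt0 // mulr_gt0.
have [x hx] := hAS (eta ^+ 2) (exprn_gt0 _ eta0).
set err := S3 (S1 x) - mu *: x in hx.
set Q := q x in hx.
have Q0 : 0 < Q.
  have := le_lt_trans (q_ge0 ip err) hx.
  by rewrite pmulr_rgt0 // exprn_gt0.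
have qU : forall z, q (U z) = q z.
  by move=> z; rewrite hU (upair_iso h1) (upair_iso h2) (upair_iso h3).
have real : forall z, Im (inner (U z) (S1 (S3 z))) = 0.
  move=> z; rewrite -a1 hU i1.
  set u := S3 z; have e := a2 u u; rewrite (ip_conj ip (S2 u) u) in e.
  move: e; set w := inner (S2 u) u => e.
  have : Im w = - Im w by rewrite {1}e ImJ.
  lra.
set ex := S1 (S3 x) - mu^*%C *: x.
have eex : ex = (- mu^*%C) *: S1 (S3 err).
  rewrite /ex /err (linB l3) (linZ l3) i3 (linB l1) (linZ l1).
  rewrite scalerBr scalerA mulNr hmm i1 scaleN1r opprK scaleNr addrC //.
have qex : q ex = q err by rewrite eex (qZ ip) hn2J mul1r (upair_iso h1) (upair_iso h3).
have eIx : Im (mu * inner (U x) x) = - Im (inner (U x) ex).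
  have := real x; rewrite /ex (ipBr ip) (ipZr ip).
  have -> : mu^*%C^*%C = mu by case: (mu) => a b /=; rewrite opprK.
  cRI; lra.
set y := S1 x.
have qy : q y = Q by rewrite /y (upair_iso h1).
set ey := S1 (S3 y) - mu *: y.
have eey : ey = S1 err by rewrite /ey /err (linB l1) (linZ l1).
have qey : q ey = q err by rewrite eey (upair_iso h1).
have eIy : Im (mu^*%C * inner (U y) y) = - Im (inner (U y) ey).
  have := real y; rewrite /ey (ipBr ip) (ipZr ip).
  cRI; lra.
have bIx : `|Im (mu * inner (U x) x)| <= eta * Q.
  rewrite eIx normrN.
  have := imbound ip (U x) ex eta0; rewrite qU qex -/Q => h.
  have h' : `|Im (inner (U x) ex)| * (2 * eta) <= (eta * Q) * (2 * eta).
    apply: le_trans h _; move: hx; rewrite -/Q => hx.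
    have -> : eta * Q * (2 * eta) = eta ^+ 2 * Q + eta ^+ 2 * Q by ring.
    by rewrite lerD2l ltW.
  have t0 : 0 < 2 * eta by rewrite mulr_gt0.
  by move: h'; rewrite ler_pM2r.
have bIy : `|Im (mu^*%C * inner (U y) y)| <= eta * Q.
  rewrite eIy normrN.
  have := imbound ip (U y) ey eta0; rewrite qU qey qy => h.
  have h' : `|Im (inner (U y) ey)| * (2 * eta) <= (eta * Q) * (2 * eta).
    apply: le_trans h _; move: hx; rewrite -/Q => hx.
    have -> : eta * Q * (2 * eta) = eta ^+ 2 * Q + eta ^+ 2 * Q by ring.
    by rewrite lerD2l ltW.
  have t0 : 0 < 2 * eta by rewrite mulr_gt0.
  by move: h'; rewrite ler_pM2r.
have bRx : `|Re (mu * inner (U x) x)| <= Q.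
  rewrite -(ipZl ip); apply: le_trans (rebound ip _ _) _.
  rewrite (qZ ip) hmu mul1r qU -/Q; lra.
have bRy : `|Re (mu^*%C * inner (U y) y)| <= Q.
  rewrite -(ipZl ip); apply: le_trans (rebound ip _ _) _.
  have e : n2 mu^*%C = 1 by rewrite -hmu /n2; cRI; rewrite sqrrN.
  rewrite (qZ ip) e mul1r qU qy; lra.
have eprod : Im (inner (U x) x * inner (U y) y) =
   Re (mu * inner (U x) x) * Im (mu^*%C * inner (U y) y) +
   Im (mu * inner (U x) x) * Re (mu^*%C * inner (U y) y).
  rewrite -ImM mulrACA hmm' mul1r //.
move: eprod bIx bIy bRx bRy; rewrite ImM.
have l1x := hb1 x; have l2x := hb2 x; have l1y := hb1 y; have l2y := hb2 y.
rewrite qy in l1y l2y; rewrite -/Q in l1x l2x.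
move: l1x l2x l1y l2y.
set Xr := Re (inner (U x) x); set Xi := Im (inner (U x) x).
set Yr := Re (inner (U y) y); set Yi := Im (inner (U y) y).
set Ar := Re (mu * _); set Ai := Im (mu * _).
set Br := Re (mu^*%C * _); set Bi := Im (mu^*%C * _).
move=> l1x l2x l1y l2y eprod bIx bIy bRx bRy.
have p1 : m1 * Q * (m2 * Q) <= (cs * Xr) * (ss * Yi).
  by apply: ler_pM => //; apply: mulr_ge0; apply: ltW.
have p2 : m2 * Q * (m1 * Q) <= (ss * Xi) * (cs * Yr).
  by apply: ler_pM => //; apply: mulr_ge0; apply: ltW.
have key : cs * ss * (Xr * Yi + Xi * Yr) = (cs * Xr) * (ss * Yi) + (ss * Xi) * (cs * Yr).
  by ring.
have n1 : `|Ar * Bi| <= Q * (eta * Q) by rewrite normrM; apply: ler_pM.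
have n2' : `|Ai * Br| <= (eta * Q) * Q by rewrite normrM; apply: ler_pM.
have ncs : `|cs * ss| = 1.
  have : (cs * ss) ^+ 2 = 1 by rewrite exprMn hcs hss mul1r.
  move/eqP; rewrite sqrf_eq1 => /orP [] /eqP ->; by rewrite ?normrN normr1.
have hsum : `|Xr * Yi + Xi * Yr| <= 2 * eta * Q * Q.
  rewrite eprod; apply: le_trans (ler_normD _ _) _.
  have : `|Ar * Bi| + `|Ai * Br| <= Q * (eta * Q) + eta * Q * Q by apply: lerD.
  move=> h; apply: le_trans h _; rewrite le_eqVlt; apply/orP; left; apply/eqP; ring.
have : cs * ss * (Xr * Yi + Xi * Yr) <= 2 * eta * Q * Q.
  apply: le_trans (ler_norm _) _; by rewrite normrM ncs mul1r.
rewrite key /eta.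
have QQ : 0 < Q * Q := mulr_gt0 Q0 Q0.
move=> h.
have : 2 * (m1 * m2 * (Q * Q)) <= m1 * m2 * (Q * Q).
  apply: le_trans _ (_ : 2 * (m1 * m2 / 2) * Q * Q <= _); last first.
    by rewrite le_eqVlt; apply/orP; left; apply/eqP; field.
  apply: le_trans _ h.
  have -> : 2 * (m1 * m2 * (Q * Q)) = m1 * Q * (m2 * Q) + m2 * Q * (m1 * Q) by ring.
  by apply: lerD.
have : 0 < m1 * m2 * (Q * Q) by rewrite !mulr_gt0.
lra.
Qed.

End Fin2.

Definition csgn (R : realType) (k : nat) : R := if (k == 1)%N || (k == 4)%N then 1 else -1.
Definition ssgn (R : realType) (k : nat) : R := if (k <= 2)%N then 1 else -1.

Lemma arc_base (R : realType) (a : R) : 0 < a < pi / 2 -> 0 < cos a /\ 0 < sin a.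
Proof.
move=> /andP [h1 h2]; split.
  apply: cos_gt0_pihalf; apply/andP; split => //.
  have := pi_gt0 R; lra.
by apply: sin_gt0_pihalf; apply/andP.
Qed.

Lemma arc_sign (R : realType) (k : nat) (z : R[i]) : (1 <= k <= 4)%N -> arcC k z ->
  0 < csgn R k * Re z /\ 0 < ssgn R k * Im z.
Proof.
move=> hk [al [h1 [h2 ->]]] /=.
have pi0 := pi_gt0 R.
set th := 2%:R * pi * al.
have eth : th = 2 * (pi * al) by rewrite /th mulrA.
have l1 : pi * ((k%:R - 1) / 4%:R) < pi * al by rewrite ltr_pM2l.
have l2 : pi * al < pi * (k%:R / 4%:R) by rewrite ltr_pM2l.
move: l1 l2; rewrite eth; clearbody th; subst th.
set p := pi * al.
case: k hk h1 h2 => [|[|[|[|[|k]]]]] //= _ _ _ l1 l2; rewrite /csgn /ssgn /=.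
- have [] := arc_base (a := 2 * p) _; last by move=> *; rewrite !mul1r.
  apply/andP; split; move: l1 l2; rewrite ?mulr0 ?mul0r; lra.
- pose a := 2 * p - pi / 2.
  have ea : 2 * p = a + pi / 2 by rewrite /a subrK.
  have [] := arc_base (a := a) _.
    apply/andP; split; rewrite /a; move: l1 l2; lra.
  by rewrite ea cosDpihalf sinDpihalf mulN1r mul1r opprK.
- pose a := 2 * p - pi.
  have ea : 2 * p = a + pi by rewrite /a subrK.
  have [] := arc_base (a := a) _.
    apply/andP; split; rewrite /a; move: l1 l2; lra.
  by rewrite ea cosDpi sinDpi !mulN1r !opprK.
- pose a := 2 * p - pi - pi / 2.
  have ea : 2 * p = a + pi / 2 + pi by rewrite /a !subrK.
  have [] := arc_base (a := a) _.
    apply/andP; split; rewrite /a; move: l1 l2; lra.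
  by rewrite ea cosDpi sinDpi cosDpihalf sinDpihalf mulN1r mul1r !opprK => *; split.
Qed.

Local Open Scope complex_scope.
Lemma spec_of_AS (R : realType) (H : lmodType R[i]) (inner : H -> H -> R[i])
  (ip : is_inner_product inner) (U : H -> H) (mu : R[i]) :
  bounded_op inner U -> AS inner (fun x => U x - mu *: x) -> spectrum inner U mu.
Proof.
move=> bU hA; apply: contrapT => hn.
exact: (AS_LI ip hA (notspec_LI ip bU hn)).
Qed.


Theorem proposition4p5 (R : realType) (H : lmodType R[i])
    (inner : H -> H -> R[i]) (U : H -> H) (k : nat) :
  is_hilbert inner ->
  (exists x : H, x != 0) ->
  (1 <= k <= 4)%N ->
  unitary inner U ->
  spectrum inner U `<=` @arcC R k ->
  ~ exists S1 S2 S3 : H -> H,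
      [/\ symmetry inner S1, symmetry inner S2, symmetry inner S3
        & forall x : H, U x = S1 (S2 (S3 x))].
Proof.
move=> [ip _] hne hk hU hsp [S1 [S2 [S3 [hS1 hS2 hS3 hUe]]]].
have [U' hUU'] := unitary_upair hU.
have bU : bounded_op inner U := hU.1.
have u1 := sym_upair ip hS1; have u2 := sym_upair ip hS2; have u3 := sym_upair ip hS3.
have [l1 _ a1 i1 _] := u1; have [l3 _ a3 i3 _] := u3.
set cs := csgn R k; set ss := ssgn R k.
have hcs : cs ^+ 2 = 1 by rewrite /cs /csgn; case: ifP => _; rewrite ?sqrrN expr1n.
have hss : ss ^+ 2 = 1 by rewrite /ss /ssgn; case: ifP => _; rewrite ?sqrrN expr1n.
have [m1 [_ hm1 hAS1]] := lemG ip (c := cs%:C) hUU' (ltac:(by rewrite /n2; cRI; rewrite expr0n addr0)) hne.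
have m1pos : 0 < m1.
  have gen : forall t, AS inner (fun x => U x - (cs%:C * (m1 +i* t)) *: x) -> 0 < m1.
    move=> t hA; have [h _] := arc_sign hk (hsp _ (spec_of_AS ip bU hA)).
    move: h; cRI; rewrite mul0r subr0 mulrA -expr2 hcs mul1r //.
  by case: hAS1 => /gen.
have [m2 [_ hm2 hAS2]] := lemG ip (c := 0 +i* ss) hUU'
  (ltac:(by rewrite /n2; cRI; rewrite expr0n add0r)) hne.
have m2pos : 0 < m2.
  have gen : forall t, AS inner (fun x => U x - ((0 +i* ss) * (m2 +i* t)) *: x) -> 0 < m2.
    move=> t hA; have [_ h] := arc_sign hk (hsp _ (spec_of_AS ip bU hA)).
    move: h; cRI; rewrite -[X in X * t + _]/(0 : R) mul0r add0r mulrA -expr2 hss mul1r //.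
  by case: hAS2 => /gen.
have hb1 : forall x, m1 * qq inner x <= cs * Re (inner (U x) x).
  by move=> x; have := hm1 x; cRI; rewrite oppr0 mul0r subr0.
have hb2 : forall x, m2 * qq inner x <= ss * Im (inner (U x) x).
  by move=> x; have := hm2 x; cRI; rewrite mul0r add0r mulNr opprK.
set T := fun x => S3 (S1 x); set T' := fun x => S1 (S3 x).
have hTT' : upair inner T T'.
  split.
  - by move=> a x y; rewrite /T l1 l3.
  - by move=> a x y; rewrite /T' l3 l1.
  - by move=> x y; rewrite /T /T' a3 a1.
  - by move=> x; rewrite /T /T' i3 i1.
  - by move=> x; rewrite /T /T' i1 i3.
have [m [hmb _ hAS]] := lemG ip (c := 1) hTT' (ltac:(by rewrite /n2; cRI; rewrite expr0n addr0 expr1n)) hne.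
set s := Num.sqrt (1 - m ^+ 2) in hAS.
have hs2 : s ^+ 2 = 1 - m ^+ 2.
  rewrite /s sqr_sqrtr // subr_ge0; case/andP: hmb => h1 h2; nra.
have gen : forall t, t ^+ 2 = s ^+ 2 ->
    AS inner (fun x => T x - (1 * (m +i* t)) *: x) -> False.
  move=> t ht hA.
  apply: (final ip u1 u2 u3 hUe _ hA hcs hss m1pos m2pos hb1 hb2).
  by rewrite /n2; cRI; rewrite !mul1r !mul0r subr0 addr0 ht hs2 subrKC.
by case: hAS => /gen; apply; rewrite ?sqrrN.
Qed.
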